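(* Let $n>k\ge 1$ be integers, not both even, such that $n\neq Mk$ for every positive integer $M$. Let $\alpha=\lceil n/2\rceil-\lfloor (n-k)/2\rfloor$, $\beta=k-\alpha$, and $G=\sqrt{n/k}\,W_n^H\Sigma W_k$. Then no systematic DFT frame $G_{\mathrm{sys}}=GG_k^{-1}$ (with $G_k$ any $k\times k$ submatrix of $G$ formed by $k$ distinct rows) is tight; i.e. for every such $G_k$ there is no $c>0$ with $G_{\mathrm{sys}}^HG_{\mathrm{sys}}=cI_k$.
   Context: For a positive integer $l$, $W_l$ denotes the unitary $l\times l$ DFT matrix, $(W_l)_{r,s}=\frac{1}{\sqrt l}e^{-j2\pi(r-1)(s-1)/l}$, and $^H$ denotes conjugate transpose. $\Sigma$ is the $n\times k$ matrix $\begin{pmatrix} I_\alpha & 0\\ 0 & 0\\ 0 & I_\beta\end{pmatrix}$: its first $\alpha$ rows are $(I_\alpha\ 0)$, its last $\beta$ rows are $(0\ I_\beta)$, and its middle $n-k$ rows are zero. For any choice of $k$ distinct rows of $G$, the resulting $k\times k$ submatrix $G_k$ is invertible, and the matrix $G_{\mathrm{sys}}=GG_k^{-1}$ (an $n\times k$ matrix containing $I_k$ as a submatrix) is called a systematic DFT frame. A frame with $n\times k$ analysis operator $F$ is tight if $F^HF=cI_k$ for some $c>0$, equivalently all eigenvalues of $F^HF$ are equal. *)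

(* Defs.v *)
From HB Require Import structures.
From mathcomp Require Import all_boot all_order all_algebra.
From mathcomp Require Import reals trigo.
From mathcomp Require Import complex.
Set Implicit Arguments. Unset Strict Implicit. Unset Printing Implicit Defensive.
Import Order.TTheory GRing.Theory Num.Theory.
Local Open Scope ring_scope.
Local Open Scope complex_scope.

Section Defs.
Variable R : realType.

Definition expi_neg (l m : nat) : R[i] :=
  let t := 2 * pi * m%:R / l%:R in (cos t) +i* (- sin t).

(* unitary l x l DFT matrix: (W_l)_{r,s} = 1/sqrt l * e^{-j2pi r s / l} (0-based) *)
Definition DFT (l : nat) : 'M[R[i]]_l :=
  \matrix_(i0 < l, j0 < l) (((Num.sqrt (l%:R : R))^-1)%:C * expi_neg l (i0 * j0)%N).

Definition mxH (m p : nat) (A : 'M[R[i]]_(m, p)) : 'M[R[i]]_(p, m) :=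
  (map_mx (fun z : R[i] => z^*) A)^T.

(* Sigma: first a rows (I_a 0), last b rows (0 I_b), middle rows zero *)
Definition Sigma (n k a : nat) : 'M[R[i]]_(n, k) :=
  \matrix_(r < n, s < k)
    (if ((r < a)%N && (s == r :> nat)) || ((a <= s)%N && (s + n == r + k)%N)
     then 1 else 0).

Definition alpha (n k : nat) : nat := (uphalf n - (n - k)./2)%N.
Definition beta (n k : nat) : nat := (k - alpha n k)%N.

Definition Gmat (n k : nat) : 'M[R[i]]_(n, k) :=
  (Num.sqrt (n%:R / k%:R : R))%:C *: (mxH (DFT n) *m Sigma n k (alpha n k) *m DFT k).

Definition Gsys (n k : nat) (f : 'I_k -> 'I_n) : 'M[R[i]]_(n, k) :=
  Gmat n k *m invmx (rowsub f (Gmat n k)).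

Definition tight (n k : nat) (F : 'M[R[i]]_(n, k)) : Prop :=
  exists c : R, 0 < c /\ mxH F *m F = (c%:C)%:M.

End Defs.

(* Main.v *)
Require Import Defs.
From HB Require Import structures.
From mathcomp Require Import all_boot all_order all_algebra.
From mathcomp Require Import reals trigo.
From mathcomp Require Import complex.
From mathcomp Require Import ring lra zify.
Import Order.TTheory GRing.Theory Num.Theory.
Local Open Scope ring_scope.
Local Open Scope complex_scope.


Local Open Scope nat_scope.
Lemma comb n k (f : 'I_k -> 'I_n) : injective f -> (0 < k)%N -> (k < n)%N ->
  (forall i j, (f i * k) %% n = (f j * k) %% n) -> exists M, (0 < M)%N /\ n = (M * k)%N.
Proof.
move=> finj k0 kn H.
set g := gcdn n k.
have g0 : (0 < g)%N by rewrite gcdn_gt0 k0 orbT.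
set n' := n %/ g; set k' := k %/ g.
have en : n = (n' * g)%N by rewrite divnK // dvdn_gcdl.
have ek : k = (k' * g)%N by rewrite divnK // dvdn_gcdr.
have n'0 : (0 < n')%N by rewrite divn_gt0 // (leq_trans (dvdn_leq k0 (dvdn_gcdr n k))) // ltnW.
have cop : coprime n' k'.
  have : (g = gcdn n' k' * g)%N by rewrite muln_gcdl -en -ek.
  by rewrite -{1}(mul1n g) => /eqP; rewrite eqn_pmul2r // eq_sym.
have Hm : forall i j, (f i %% n' = f j %% n')%N.
  move=> i j; have := H i j; rewrite {2 4}en ek !mulnA -!muln_modl // => /eqP.
  rewrite eqn_pmul2r // => /eqP e.
  wlog le : i j e / (f j <= f i)%N => [W|].
    by case: (leqP (f j) (f i)) => h; [exact: W | apply/esym/W => //; exact: ltnW].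
  apply/eqP; rewrite eqn_mod_dvd //.
  have : (f i * k' == f j * k' %[mod n'])%N by rewrite e.
  by rewrite eqn_mod_dvd ?leq_mul2r ?le ?orbT // -mulnBl Gauss_dvdl.
have hlt : forall i, (f i %/ n' < g)%N.
  by move=> i; rewrite ltn_divLR // mulnC -en.
pose h (i : 'I_k) : 'I_g := Ordinal (hlt i).
have hinj : injective h.
  move=> i j /(congr1 val) /= e; apply: finj; apply: val_inj.
  change (nat_of_ord (f i) = nat_of_ord (f j)); by rewrite (divn_eq (f i) n') (divn_eq (f j) n') e (Hm i j).
have kg : (k <= g)%N by have := leq_card h hinj; rewrite !card_ord.
have gk : (g <= k)%N by apply: dvdn_leq => //; apply: dvdn_gcdr.
have eg : g = k by apply/eqP; rewrite eqn_leq gk kg.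
exists (n %/ k); split; first by rewrite divn_gt0 // ltnW.
by rewrite divnK // -eg dvdn_gcdl.
Qed.

Lemma alpha_le' n k : (1 <= k)%N -> (k < n)%N -> (uphalf n - (n - k)./2 <= k)%N.
Proof.
move=> k1 kn; rewrite leq_subLR uphalf_half.
have h1 := odd_double_half n; have h2 := odd_double_half (n - k).
have b1 := leq_b1 (odd n); have b2 := leq_b1 (odd (n - k)).
rewrite -!muln2 in h1 h2.
lia.
Qed.

Local Open Scope ring_scope.
Local Open Scope complex_scope.
Section S.
Variable R : realType.
Definition ee (x : R) : R[i] := (cos x) +i* (- sin x).

Lemma eeD x y : ee (x + y) = ee x * ee y.
Proof.
rewrite /ee cosD sinD; apply/eqP; rewrite eq_complex /=; apply/andP; split; apply/eqP.
  ring.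
ring.
Qed.

Lemma ee0 : ee 0 = 1.
Proof. by rewrite /ee cos0 sin0 oppr0. Qed.

Lemma eeJ x : conjc (ee x) * ee x = 1.
Proof.
rewrite /ee; apply/eqP; rewrite eq_complex /=; apply/andP; split; apply/eqP.
  rewrite -(cos2Dsin2 x); ring.
ring.
Qed.

Lemma expi_ee l m : expi_neg R l m = ee (m%:R * (2 * pi / l%:R)).
Proof. by rewrite /expi_neg /ee (mulrC m%:R) mulrAC. Qed.

Lemma ee_nat m x : ee (m%:R * x) = (ee x) ^+ m.
Proof.
elim: m => [|m IH]; first by rewrite mul0r ee0 expr0.
by rewrite exprS -IH -eeD mulrS mulrDl mul1r.
Qed.

Lemma expi_negE l m : expi_neg R l m = (ee (2 * pi / l%:R)) ^+ m.
Proof. by rewrite expi_ee ee_nat. Qed.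

Definition zz (l : nat) := ee (2 * pi / l%:R).

Lemma zz_l l : (0 < l)%N -> zz l ^+ l = 1.
Proof.
move=> l0; rewrite /zz -ee_nat mulrC divfK ?pnatr_eq0 -?lt0n //.
rewrite /ee mulr_natl cos2pi sin2pi oppr0 //.
Qed.

Lemma zz_prim l r : (0 < r)%N -> (r < l)%N -> zz l ^+ r != 1.
Proof.
move=> r0 rl; rewrite /zz -ee_nat; apply/negP => /eqP.
set q := (r%:R / l%:R : R).
have q0 : 0 < q by rewrite divr_gt0 // ltr0n // (leq_trans r0 (ltnW rl)).
have q1 : q < 1 by rewrite ltr_pdivrMr ?ltr0n ?(leq_trans r0 (ltnW rl)) // mul1r ltr_nat.
have -> : r%:R * (2 * pi / l%:R) = (pi * q) *+ 2.
  by rewrite /q; ring.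
case=> hc _.
have hy : 0 < pi * q < pi by apply/andP; split; have := @pi_gt0 R; nra.
have := sin_gt0_pi hy.
move: hc; rewrite cos_mulr2n => hc.
have : sin (pi * q) ^+ 2 = 0 by rewrite sin2cos2; move: hc; rewrite mulr2n; lra.
by move/eqP; rewrite expf_eq0 /= => /eqP ->; rewrite ltxx.
Qed.

Lemma zzJM l m : conjc (zz l ^+ m) * zz l ^+ m = 1.
Proof. by rewrite rmorphXn -exprMn eeJ expr1n. Qed.

Lemma zz_neq0 l m : zz l ^+ m != 0.
Proof. by apply/negP => /eqP h; have := zzJM l m; rewrite h mulr0 => /eqP; rewrite eq_sym oner_eq0. Qed.

Lemma zzJ l m : conjc (zz l ^+ m) = (zz l ^+ m)^-1.
Proof. by rewrite -[LHS]mulr1 -(mulfV (zz_neq0 l m)) mulrA zzJM mul1r. Qed.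

Lemma zz_mod l x : (0 < l)%N -> zz l ^+ x = zz l ^+ (x %% l).
Proof.
move=> l0; rewrite {1}(divn_eq x l) exprD mulnC exprM zz_l // expr1n mul1r //.
Qed.

Lemma zz_inj l x y : (x < l)%N -> (y < l)%N -> zz l ^+ x = zz l ^+ y -> x = y.
Proof.
wlog xy : x y / (x <= y)%N => [H|] xl yl e.
  case: (leqP x y) => h; first exact: H.
  by apply/esym/H => //; apply: ltnW.
have : zz l ^+ (y - x) = 1.
  apply: (mulfI (zz_neq0 l x)); rewrite -exprD subnKC // e mulr1 //.
case: (posnP (y - x)) => [/eqP|h0 h]; first by rewrite subn_eq0 => h1 _; apply/eqP; rewrite eqn_leq xy h1.
by have := @zz_prim l _ h0 (leq_ltn_trans (leq_subr x y) yl); rewrite h eqxx.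
Qed.

Lemma zz_eq l x y : (0 < l)%N -> zz l ^+ x = zz l ^+ y -> (x %% l = y %% l)%N.
Proof.
by move=> l0; rewrite (@zz_mod l x l0) (@zz_mod l y l0); apply: zz_inj; rewrite ltn_mod.
Qed.

Lemma geom0 (u : R[i]) l : u ^+ l = 1 -> u != 1 -> \sum_(t < l) u ^+ t = 0.
Proof.
move=> ul u1; have := subrX1 u l; rewrite ul subrr => /esym/eqP.
by rewrite mulf_eq0 subr_eq0 (negbTE u1) /= => /eqP.
Qed.

Lemma mxH_mul m p q (A : 'M[R[i]]_(m, p)) (B : 'M[R[i]]_(p, q)) :
  mxH (A *m B) = mxH B *m mxH A.
Proof.
apply/matrixP => i j; rewrite !mxE rmorph_sum; apply: eq_bigr => t _.
by rewrite !mxE rmorphM mulrC.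
Qed.

Lemma mxH_scale m p (c : R[i]) (A : 'M[R[i]]_(m, p)) : mxH (c *: A) = conjc c *: mxH A.
Proof. by apply/matrixP => i j; rewrite !mxE rmorphM. Qed.

Lemma mxHK m p (A : 'M[R[i]]_(m, p)) : mxH (mxH A) = A.
Proof. by apply/matrixP => i j; rewrite !mxE conjcK. Qed.

Lemma DFTE l (i j : 'I_l) : DFT R l i j = ((Num.sqrt (l%:R : R))^-1)%:C * zz l ^+ (i * j).
Proof. by rewrite mxE expi_negE. Qed.

Lemma sqrt_inv2 l : (0 < l)%N -> l%:R * ((Num.sqrt (l%:R : R))^-1 * (Num.sqrt (l%:R : R))^-1) = 1.
Proof.
move=> l0; rewrite -invfM -expr2 sqr_sqrtr ?ler0n // mulfV //.
by rewrite pnatr_eq0 -lt0n.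
Qed.

Lemma conjRM (x : R) (y : R[i]) : conjc (x%:C * y) = x%:C * conjc y.
Proof.
case: y => a b; apply/eqP; rewrite eq_complex /=; apply/andP; split; apply/eqP; ring.
Qed.

Lemma DFT_unitary l : DFT R l *m mxH (DFT R l) = 1%:M.
Proof.
apply/matrixP => a b; rewrite !mxE.
have l0 : (0 < l)%N by case: (l) a => [[]|].
set s := (Num.sqrt (l%:R : R))^-1.
under eq_bigr => t _ do rewrite DFTE /mxH 2!mxE DFTE /=.
have E : forall t : 'I_l, s%:C * zz l ^+ (a * t) * conjc (s%:C * zz l ^+ (b * t))
   = (s * s)%:C * (zz l ^+ a * (zz l ^+ b)^-1) ^+ t.
  move=> t; rewrite conjRM zzJ rmorphM exprMn exprVn -!exprM (mulnC a t) (mulnC b t).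
  ring.
under eq_bigr => t _ do rewrite E.
rewrite -big_distrr /=.
case: eqP => [->|/eqP ab].
  rewrite mulfV ?zz_neq0 // (eq_bigr (fun=> 1)) => [|t _]; last exact: expr1n.
  rewrite sumr_const card_ord /s.
  by rewrite -(rmorph_nat (real_complex R)) -rmorphM mulrC sqrt_inv2 // rmorph1.
rewrite geom0 ?mulr0 //.
  by rewrite exprMn exprVn -!exprM mulnC exprM zz_l // mulnC exprM zz_l // !expr1n invr1 mulr1.
apply/negP => /eqP h; move/eqP: ab; apply.
apply: val_inj; apply: (@zz_inj l) => //.
- exact: ltn_ord.
- exact: ltn_ord.
- by rewrite -[zz l ^+ val a](divfK (zz_neq0 l b)) h mul1r.
Qed.

Definition tau (n k a : nat) (s : nat) : nat := if (s < a)%N then s else (s + (n - k))%N.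

Lemma tau_lt n k a (s : 'I_k) : (k < n)%N -> (tau n k a s < n)%N.
Proof. move=> kn; rewrite /tau; case: ifP => _; have := ltn_ord s; lia. Qed.

Definition tauo n k a (kn : (k < n)%N) (s : 'I_k) : 'I_n := Ordinal (@tau_lt n k a s kn).

Lemma SigmaE n k a (t : 'I_n) (s : 'I_k) : (a <= k)%N -> (k < n)%N ->
  Sigma R n k a t s = ((t : nat) == tau n k a s)%:R.
Proof.
move=> ak kn.
have E : ((t < a)%N && (s == t :> nat)) || ((a <= s)%N && (s + n == t + k)%N) = ((t : nat) == tau n k a s).
  rewrite /tau; have := ltn_ord s; have := ltn_ord t.
  case: (ltnP s a) => h /=; move=> ht hs.
    by apply/idP/idP; [case/andP => h1 /eqP h2; apply/eqP|move/eqP => h1; apply/andP; split; [|apply/eqP]]; lia.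
  have -> : (t < a)%N && (s == t :> nat) = false by apply/negP => /andP[h1 /eqP h2]; lia.
  by rewrite /=; apply/eqP/eqP => h1; lia.
by rewrite mxE E; case: (_ == _).
Qed.

Lemma keysum (u : R[i]) n k a : (a <= k)%N -> (k <= n)%N -> u ^+ n = 1 ->
  u ^+ (k - a) * (\sum_(s < k) u ^+ (tau n k a s)) * (u - 1) = u ^+ k - 1.
Proof.
move=> ak kn un.
rewrite -(big_mkord xpredT (fun s => u ^+ (tau n k a s))) (big_cat_nat (leq0n a) ak) /=.
rewrite (@eq_big_nat _ _ _ 0 a _ (fun s => u ^+ s)); last first.
  by move=> i /andP[_ h]; rewrite /tau h.
rewrite big_mkord (big_addn 0 k a) (@eq_big_nat _ _ _ 0 (k - a) _ (fun i => u ^+ (i + a + (n - k)))); last first.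
  by move=> i _; rewrite /tau ltnNge leq_addl.
rewrite big_mkord [u ^+ (k - a) * _]mulrDr mulrDl.
have HB : u ^+ (k - a) * (\sum_(i < k - a) u ^+ (i + a + (n - k))) = \sum_(i < k - a) u ^+ i.
  rewrite big_distrr /=; apply: eq_bigr => i _; rewrite -exprD.
  have -> : (k - a + (i + a + (n - k)) = i + n)%N by lia.
  by rewrite exprD un mulr1.
rewrite HB.
rewrite -mulrA [_ * (u - 1)]mulrC -subrX1 [(\sum_(i < k - a) _) * _]mulrC -subrX1.
by rewrite mulrBr mulr1 -exprD subnK // addrA subrK.
Qed.

Lemma mxH1 m : mxH (1%:M : 'M[R[i]]_m) = 1%:M.
Proof. by apply/matrixP => i j; rewrite !mxE eq_sym; case: (_ == _); rewrite ?rmorph1 ?rmorph0. Qed.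

Lemma tau_inj n k a (s s' : 'I_k) : (k < n)%N -> tau n k a s = tau n k a s' -> s = s'.
Proof.
move=> kn; rewrite /tau => e; apply: val_inj => /=; have := ltn_ord s; have := ltn_ord s'.
by move: e; case: ifP => h1; case: ifP => h2; lia.
Qed.

Lemma SS n k a (ak : (a <= k)%N) (kn : (k < n)%N) :
  mxH (Sigma R n k a) *m Sigma R n k a = 1%:M.
Proof.
apply/matrixP => s s'; rewrite [LHS]mxE [RHS]mxE (bigD1 (@tauo n k a kn s)) //= big1 ?addr0.
  rewrite /mxH 2!mxE /= !SigmaE // eqxx conjc_nat mul1r /=.
  case: (eqVneq s s') => [->|ne]; first by rewrite eqxx.
  case: eqP => // e; exfalso; move/eqP: ne; apply; exact: (@tau_inj n k a s s' kn e).
move=> t nt; rewrite /mxH 2!mxE /= !SigmaE //.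
have -> : ((t : nat) == tau n k a s) = false.
  by apply/negP => /eqP e; move/eqP: nt; apply; apply: val_inj.
by rewrite conjc_nat mul0r.
Qed.

Lemma WSE n k a (ak : (a <= k)%N) (kn : (k < n)%N) (i : 'I_n) (s : 'I_k) :
  (mxH (DFT R n) *m Sigma R n k a) i s
  = ((Num.sqrt (n%:R : R))^-1)%:C * (zz n ^+ (tau n k a s * i))^-1.
Proof.
rewrite mxE (bigD1 (@tauo n k a kn s)) //= big1 ?addr0.
  by rewrite /mxH 2!mxE /= SigmaE // eqxx mulr1 DFTE conjRM zzJ.
move=> t nt; rewrite SigmaE //.
have -> : ((t : nat) == tau n k a s) = false.
  by apply/negP => /eqP e; move/eqP: nt; apply; apply: val_inj.
by rewrite mulr0.
Qed.

Lemma GHG n k : (alpha n k <= k)%N -> (k < n)%N ->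
  mxH (Gmat R n k) *m Gmat R n k = ((Num.sqrt (n%:R / k%:R : R))%:C * (Num.sqrt (n%:R / k%:R : R))%:C)%:M.
Proof.
move=> ak kn; rewrite /Gmat mxH_scale -scalemxAl -scalemxAr scalerA conjc_real.
rewrite !mxH_mul mxHK.
set V := DFT R k; set S := Sigma R n k (alpha n k); set D := DFT R n.
have -> : mxH V *m (mxH S *m D) *m (mxH D *m S *m V) = 1%:M.
  rewrite !mulmxA -[mxH V *m mxH S *m D *m mxH D]mulmxA DFT_unitary mulmx1.
  rewrite -[mxH V *m mxH S *m S]mulmxA SS // mulmx1.
  by apply: mulmx1C; apply: DFT_unitary.
by rewrite scalemx1.
Qed.

Lemma GGH n k (ak : (alpha n k <= k)%N) (kn : (k < n)%N) (a b : 'I_n) :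
  (Gmat R n k *m mxH (Gmat R n k)) a b =
  ((Num.sqrt (n%:R / k%:R : R))%:C * (Num.sqrt (n%:R / k%:R : R))%:C) *
  (((Num.sqrt (n%:R : R))^-1 * (Num.sqrt (n%:R : R))^-1)%:C *
   \sum_(s < k) (zz n ^+ b / zz n ^+ a) ^+ tau n k (alpha n k) s).
Proof.
rewrite /Gmat mxH_scale -scalemxAl -scalemxAr scalerA conjc_real [LHS]mxE; congr (_ * _).
set V := DFT R k; set S := Sigma R n k (alpha n k); set D := DFT R n.
rewrite (@mxH_mul n k k (mxH D *m S) V) mulmxA -[mxH D *m S *m V *m mxH V]mulmxA DFT_unitary mulmx1.
rewrite mxE big_distrr /=; apply: eq_bigr => s _.
rewrite /mxH [in X in _ * X]mxE [in X in _ * X]mxE /= !WSE // conjRM conjc_inv zzJ invrK.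
rewrite rmorphM exprMn exprVn -!exprM (mulnC a) (mulnC b).
ring.
Qed.

Lemma rowsubH m p q (A : 'M[R[i]]_(m, p)) (f : 'I_q -> 'I_m) i j :
  (rowsub f A *m mxH (rowsub f A)) i j = (A *m mxH A) (f i) (f j).
Proof. by rewrite !mxE; apply: eq_bigr => t _; rewrite /mxH !mxE. Qed.

Lemma realC_neq0 (x : R) : x != 0 -> x%:C != 0.
Proof. by move=> x0; apply/negP => /eqP /(congr1 (@complex.Re R)) /= /eqP; rewrite (negbTE x0). Qed.
End S.

Theorem corollary1 (R : realType) (n k : nat)
  (hk : (1 <= k)%N) (hkn : (k < n)%N)
  (hnotbotheven : ~~ (~~ odd n && ~~ odd k))
  (hmult : forall M : nat, (0 < M)%N -> n != (M * k)%N)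
  (f : 'I_k -> 'I_n) (finj : injective f)
  (hinv : rowsub f (Gmat R n k) \in unitmx) :
  ~ tight (Gsys R f).
Proof.
move=> [c [c0 hc]].
have ak : (alpha n k <= k)%N by rewrite /alpha; apply: (@alpha_le' n k).
have n0 : (0 < n)%N by apply: leq_ltn_trans hkn.
rewrite /Gsys in hc.
set G := Gmat R n k in hinv hc.
set Y := rowsub f G in hinv hc.
set X := invmx Y in hc.
set sg := (Num.sqrt (n%:R / k%:R : R))%:C.
have sg0 : sg != 0.
  apply: realC_neq0; rewrite gt_eqF // sqrtr_gt0 divr_gt0 // ltr0n //.
set lam := sg * sg.
have lam0 : lam != 0 by rewrite mulf_neq0.
have c0C : c%:C != 0 by apply: realC_neq0; rewrite gt_eqF.
have hGHG : mxH G *m G = lam%:M by apply: GHG.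
have hXX : lam *: (mxH X *m X) = (c%:C)%:M.
  rewrite -hc mxH_mul -mulmxA [mxH G *m (G *m X)]mulmxA hGHG mul_scalar_mx.
  by rewrite -scalemxAr scalemxAl.
have hXY : X *m Y = 1%:M by apply: mulVmx.
set mu := lam^-1 * c%:C.
have mu0 : mu != 0 by rewrite mulf_neq0 ?invr_eq0.
have hYY : (mu *: mxH Y) *m Y = 1%:M.
  have e1 : mxH Y *m (mxH X *m X) *m Y = 1%:M.
    by rewrite !mulmxA -(mulmxA _ X Y) -mxH_mul hXY mxH1 mulmx1.
  have hXX' : mxH X *m X = mu *: 1%:M.
    have := congr1 (fun M => lam^-1 *: M) hXX; rewrite scalerA (mulVf lam0) scale1r => ->. by rewrite -[(c%:C)%:M]scalemx1 scalerA.
  by rewrite hXX' -scalemxAr mulmx1 in e1.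
have hYY' : mu *: (Y *m mxH Y) = 1%:M by rewrite scalemxAr; apply: mulmx1C.
have Hmod : forall i j, ((f i * k) %% n = (f j * k) %% n)%N.
  move=> i j; case: (eqVneq i j) => [->//|ne].
  have e0 : (Y *m mxH Y) i j = 0.
    have := congr1 (fun M : 'M[R[i]]_k => M i j) hYY'; rewrite /= [LHS]mxE [RHS]mxE (negbTE ne) /=.
    by move/eqP; rewrite mulf_eq0 (negbTE mu0) /= => /eqP.
  rewrite /Y rowsubH /G GGH // in e0.
  move/eqP: e0; rewrite mulf_eq0 (negbTE lam0) /= mulf_eq0.
  have sn0 : ((Num.sqrt (n%:R : R))^-1 * (Num.sqrt (n%:R : R))^-1)%:C != 0.
    by apply: realC_neq0; rewrite mulf_neq0 // invr_eq0 gt_eqF // sqrtr_gt0 ltr0n.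
  rewrite (negbTE sn0) /= => /eqP hs.
  set u := zz R n ^+ f j / zz R n ^+ f i.
  have un : u ^+ n = 1.
    by rewrite /u exprMn exprVn -!exprM mulnC exprM zz_l // mulnC exprM zz_l // !expr1n invr1 mulr1.
  have := @keysum R u n k (alpha n k) ak (ltnW hkn) un; rewrite /u hs mulr0 mul0r => /esym /eqP.
  rewrite subr_eq0 exprMn exprVn -!exprM => /eqP h.
  have h' : zz R n ^+ (f j * k) = zz R n ^+ (f i * k).
    by rewrite -[LHS](divfK (zz_neq0 R n (f i * k))) h mul1r.
  by apply/esym; apply: (@zz_eq R n _ _ n0).
have [M [M0 eM]] := @comb n k f finj hk hkn Hmod.
by move: (hmult M M0); rewrite eM eqxx.
Qed.
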